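(* Let $n_1,\dots,n_s\ge0$, $A=\mathrm{diag}(\mathbb{J}_{1,n_1}(0),\dots,\mathbb{J}_{s,n_s}(0))$, and let $B$ satisfy $AB+BA=0$. Write $B=(B_{ij})_{1\le i,j\le s}$ in the block form of $A$ ($B_{ij}$ of size $in_i\times jn_j$), so that $B_{ij}=\mathrm{LB}^-(i,j,(B^{(1)}_{ij},\dots,B^{(\min(i,j))}_{ij}))$ with $n_i\times n_j$ matrices $B^{(k)}_{ij}$. Then: (1) $B$ is similar to a block upper-triangular matrix whose diagonal blocks are, up to order, the matrices $B^{(1)}_{ii}$ (each appearing $\lceil i/2\rceil$ times) and $-B^{(1)}_{ii}$ (each appearing $\lfloor i/2\rfloor$ times), $1\le i\le s$; (2) $\chi^B(X)=\prod_{i=1}^s\chi^{B_{ii}}(X)$; (3) $\chi^B(X)=\prod_{i=1}^s\big(\chi^{B^{(1)}_{ii}}(X)\big)^{\lceil i/2\rceil}\big(\chi^{-B^{(1)}_{ii}}(X)\big)^{\lfloor i/2\rfloor}$.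
   Context: $\chi^M(X)$ is the characteristic polynomial of a square matrix $M$. $\mathbb{J}_{i,k}(0)$ is the $i\times i$ block matrix with $k\times k$ blocks whose $(l,l+1)$ blocks are $I_k$ ($1\le l\le i-1$) and all other blocks $0$. For matrices $C_1,\dots,C_k$ of the same size, $k=\min(s,t)$, the $s\times t$ block matrix $\mathrm{LB}^-(s,t,(C_1,\dots,C_k))$ is: if $s\ge t$, block $(i,j)$ is $(-1)^{i-1}C_{j-i+1}$ for $1\le i\le j\le t$ and $0$ otherwise; if $s\le t$, block $(i,t-s+j)$ is $(-1)^{i-1}C_{j-i+1}$ for $1\le i\le j\le s$ and all other blocks are $0$. (Every $B$ anti-commuting with $A$ has this block form.) *)

(* Defs.v *)
From HB Require Import structures.
From mathcomp Require Import all_boot all_order all_algebra.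
Set Implicit Arguments. Unset Strict Implicit. Unset Printing Implicit Defensive.
Import GRing.Theory.
Local Open Scope ring_scope.

Definition Jblk (F : fieldType) (k m : nat) : 'M[F]_(\sum_(l < k) m) :=
  \mxblock_(l < k, l' < k)
    (if val l' == (val l).+1 then (1%:M : 'M[F]_m) else 0).

(* size of the i-th diagonal block (block index i : 'I_s stands for i+1) *)
Definition bsz (s : nat) (n : 'I_s -> nat) (i : 'I_s) : nat :=
  (\sum_(l < i.+1) n i)%N.

Definition Amx (F : fieldType) (s : nat) (n : 'I_s -> nat)
  : 'M[F]_(\sum_(i < s) bsz n i) :=
  \mxdiag_(i < s) Jblk F i.+1 (n i).

(* LB^-(s,t,(C_1,...,C_min(s,t))), with C given as a function of the index
   k (only k = 1..min(s,t) are used).  0-based block indices bi, bj;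
   with d = t - s (truncated, = 0 when s >= t), block (bi,bj) is
   (-1)^bi C_(bj-d-bi+1) if bi + d <= bj, and 0 otherwise. *)
Definition LBm (F : fieldType) (s t p q : nat) (C : nat -> 'M[F]_(p, q))
  : 'M[F]_(\sum_(l < s) p, \sum_(l < t) q) :=
  \mxblock_(bi < s, bj < t)
    (if (val bi + (t - s) <= val bj)%N
     then (-1) ^+ val bi *: C (val bj - (t - s) - val bi).+1
     else 0).

(* a square matrix packaged with its size, for comparing multisets of
   diagonal blocks of different sizes *)
Definition sqm (F : fieldType) (p : nat) (M : 'M[F]_p) : {p : nat & 'M[F]_p} :=
  Tagged (fun p => 'M[F]_p) M.

Definition expected_diag (F : fieldType) (s : nat) (n : 'I_s -> nat)
  (C1 : forall i : 'I_s, 'M[F]_(n i)) : seq {p : nat & 'M[F]_p} :=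
  flatten (map (fun i : 'I_s =>
    nseq (uphalf i.+1) (sqm (C1 i)) ++ nseq (i.+1)./2 (sqm (- C1 i)))
    (enum 'I_s)).

(* Main.v *)
Require Import Defs.
From HB Require Import structures.
From mathcomp Require Import all_boot all_order all_algebra.
Import GRing.Theory.
Local Open Scope ring_scope.
Import tagnat.
Lemma det_castmx (R : comNzRingType) n1 n2 (e : n1 = n2) (A : 'M[R]_n1) :
  \det (castmx (e, e) A) = \det A.
Proof. by case: n2 / e; rewrite castmx_id. Qed.

Lemma det_mxblock_ut (R : comNzRingType) K (m : 'I_K -> nat)
  (M : 'M[R]_(\sum_(k < K) m k)) :
  (forall k l : 'I_K, (l < k)%N -> submxblock M k l = 0) ->
  \det M = \prod_(k < K) \det (submxblock M k k).
Proof.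
elim: K m M => [|K IH] m M H.
  by rewrite [RHS]big_ord0 -(@det_castmx R _ _ (big_ord0 0%N addn xpredT m : (\sum_(k < 0) m k = 0)%N) M) det_mx00.
rewrite -[M in LHS]submxblockK mxblock_recul det_castmx.
rewrite (_ : \mxcol_i _ = 0); last first.
  rewrite -(mxcol0 (p_ := fun i => m (lift ord0 i))); apply: eq_mxcol => i.
  exact: H.
rewrite det_ublock big_ord_recl; congr (_ * _).
rewrite IH; first by apply: eq_bigr => i _; rewrite mxblockK.
by move=> k l lt; rewrite mxblockK H.
Qed.

Lemma char_poly_mxblock_ut (R : comNzRingType) K (m : 'I_K -> nat)
  (M : 'M[R]_(\sum_(k < K) m k)) :
  (forall k l : 'I_K, (l < k)%N -> submxblock M k l = 0) ->
  char_poly M = \prod_(k < K) char_poly (submxblock M k k).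
Proof.
move=> H; rewrite /char_poly det_mxblock_ut.
  apply: eq_bigr => k _; congr (\det _).
  apply/matrixP => a b; rewrite !mxE.
  congr (_ - _); congr ('X *+ nat_of_bool _).
  by apply/idP/idP => /eqP E; apply/eqP; [move: E => /(congr1 val)/eqP; rewrite eq_Rank eqxx /= => /eqP /val_inj | rewrite E].
move=> k l lt; apply/matrixP => a b; rewrite !mxE.
have -> : (Rank k a == Rank l b) = false.
  apply/negbTE; rewrite -val_eqE eq_Rank; apply/nandP; left.
  by apply/eqP => E; rewrite E ltnn in lt.
have := congr1 (fun M : 'M_(m k, m l) => M a b) (H k l lt).
rewrite !mxE => ->; by rewrite mulr0n sub0r oppr0.
Qed.

Lemma det_reindex (R : comNzRingType) n1 n2 (f : 'I_n1 -> 'I_n2) :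
  bijective f -> forall Z : 'M[R]_n2,
  \det (\matrix_(x, y) Z (f x) (f y)) = \det Z.
Proof.
move=> fb; have e : n1 = n2 by have := bij_eq_card fb; rewrite !card_ord.
case: n2 / e in f fb * => Z.
pose p := perm.perm (bij_inj fb).
have -> : \matrix_(x, y) Z (f x) (f y) = row_perm p (col_perm p Z).
  by apply/matrixP => x y; rewrite !mxE !perm.permE.
rewrite row_permE col_permE !det_mulmx !det_perm perm.odd_permV.
by rewrite mulrCA -signr_addb addbb expr0 mulr1.
Qed.

Lemma parity_prod (R : comNzRingType) (h : bool -> R) m :
  \prod_(l < m) h (odd l) = h false ^+ uphalf m * h true ^+ m./2.
Proof.
elim: m h => [|m IH] h; first by rewrite big_ord0 !expr0 mulr1.
rewrite big_ord_recl /=.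
under eq_bigr do rewrite add0n.
rewrite (IH (fun b => h (~~ b))) /= exprS -mulrA; congr (_ * _); exact: mulrC.
Qed.

Lemma parity_perm (T : eqType) (h : bool -> T) m :
  perm_eq [seq h (odd l) | l <- iota 0 m] (nseq (uphalf m) (h false) ++ nseq m./2 (h true)).
Proof.
elim: m h => [|m IH] h //=.
rewrite perm_cons -[1%N]/(1 + 0)%N iotaDl -map_comp.
have -> : [seq (h \o odd \o addn 1) l | l <- iota 0 m] = [seq (fun b => h (~~ b)) (odd l) | l <- iota 0 m].
  by apply: eq_map => l /=.
apply: perm_trans (IH (fun b => h (~~ b))) _ => /=.
by rewrite perm_catC.
Qed.

Lemma perm_flatten_map (T : eqType) (I : Type) (f g : I -> seq T) (r : seq I) :
  (forall i, perm_eq (f i) (g i)) -> perm_eq (flatten (map f r)) (flatten (map g r)).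
Proof. move=> H; elim: r => //= i r IH; exact: perm_cat. Qed.


Section S.
Variable s : nat.
Definition PT := {i : 'I_s & 'I_i.+1}.
Definition hgt (p : PT) := (tag p - tagged p)%N.
Definition key (p : PT) := ((s - hgt p) * s + tag p)%N.
Definition krel := fun a b : PT => (key a <= key b)%N.
Definition sl := sort krel (enum {: PT}).
Definition KK := size sl.
Definition ee (k : 'I_KK) : PT := tnth (in_tuple sl) k.

Lemma enumPT : enum {: PT} = flatten [seq [seq Tagged (fun i : 'I_s => 'I_i.+1) l | l <- enum 'I_i.+1] | i : 'I_s <- enum 'I_s].
Proof. rewrite enumT unlock /= /tag_enum; congr flatten; rewrite enumT; apply: eq_map => i; by rewrite enumT. Qed.
From mathcomp Require Import zify.

Lemma key_inj : injective key.
Proof.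
move=> [i l] [j l']; rewrite /key /hgt /=.
move=> E.
have ltis : (i < s)%N by [].
have ltjs : (j < s)%N by [].
have eij : i = j.
  apply/val_inj => /=.
  have := congr1 (fun x => x %% s)%N E => /=.
  by rewrite !modnMDl !modn_small.
subst j.
move/eqP: E; rewrite eqn_add2r eqn_pmul2r; last by case: (i : nat) ltis => //; lia.
move=> /eqP E.
have lil : (l <= i)%N by rewrite -ltnS.
have lil' : (l' <= i)%N by rewrite -ltnS.
have ell : l = l' by apply/val_inj => /=; lia.
by rewrite ell.
Qed.

Lemma key_order (i j : 'I_s) (l : 'I_i.+1) (l' : 'I_j.+1) :
  (key (Tagged _ l') < key (Tagged _ l))%N -> ~~ (l + (j.+1 - i.+1) <= l')%N.
Proof.
rewrite /key /hgt /= => H.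
have lil : (l <= i)%N by rewrite -ltnS.
have lil' : (l' <= j)%N by rewrite -ltnS.
have ltis : (i < s)%N by [].
have ltjs : (j < s)%N by [].
apply/negP => H2.
have hh : (j - l' <= i - l)%N by lia.
move: H; set u := (s - (i - l))%N; set u' := (s - (j - l'))%N.
have uu : (u <= u')%N by rewrite /u /u'; lia.
case: (ltnP u u') => uu'.
  have : (u.+1 * s <= u' * s)%N by rewrite leq_mul2r uu' orbT.
  rewrite mulSn; lia.
have eu : u = u' by lia.
rewrite -eu ltn_add2l.
have : (j - l' = i - l)%N by rewrite /u /u' in eu; lia.
lia.
Qed.
Lemma sl_perm : perm_eq sl (enum {: PT}).
Proof. by rewrite /sl perm_sort. Qed.

Lemma sl_uniq : uniq sl.
Proof. by rewrite (perm_uniq sl_perm) enum_uniq. Qed.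

Lemma sl_sorted : sorted krel sl.
Proof. apply: sort_sorted => a b; exact: leq_total. Qed.

Lemma ee_inj : injective ee.
Proof.
move=> k1 k2; rewrite /ee !(tnth_nth (ee k1)) /= => E.
apply/val_inj/eqP; rewrite -(nth_uniq (ee k1) _ _ sl_uniq) ?E //; exact: ltn_ord.
Qed.

Lemma ee_lt (k1 k2 : 'I_KK) : (k1 < k2)%N -> (key (ee k1) < key (ee k2))%N.
Proof.
move=> lt12.
have : krel (ee k1) (ee k2).
  rewrite /ee !(tnth_nth (ee k1)) /=.
  apply: (sorted_ltn_nth (leT := krel)) => //.
  - move=> a b c; exact: leq_trans.
  - exact: sl_sorted.
  - exact: ltn_ord.
  - exact: ltn_ord.
rewrite /krel /= leq_eqVlt => /orP[/eqP/key_inj/ee_inj E|//].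
by rewrite E ltnn in lt12.
Qed.
Section M.
Variables (F : fieldType) (n : 'I_s -> nat).
Local Notation N := (\sum_(i < s) bsz n i)%N.

Definition idxB (i : 'I_s) (l : 'I_i.+1) (r : 'I_(n i)) : 'I_N :=
  @Rank s (bsz n) i (@Rank i.+1 (fun _ => n i) l r).

Lemma sig1_const m c (l : 'I_m) (r : 'I_c) : @sig1 m (fun _ => c) (@Rank m (fun _ => c) l r) = l.
Proof. exact: Rank1K. Qed.
Lemma sig2_const m c (l : 'I_m) (r : 'I_c) : @sig2 m (fun _ => c) (@Rank m (fun _ => c) l r) = r.
Proof. by apply: val_inj; rewrite Rank2K. Qed.

Lemma Bentry (B : 'M[F]_N) (C : forall i j : 'I_s, nat -> 'M[F]_(n i, n j))
  (hC : forall i j : 'I_s, submxblock B i j = LBm i.+1 j.+1 (C i j))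
  i j l l' r r' :
  B (idxB i l r) (idxB j l' r') =
  (if (l + (j.+1 - i.+1) <= l')%N then (-1) ^+ l *: C i j (l' - (j.+1 - i.+1) - l)%N.+1 else 0) r r'.
Proof.
have := congr1 (fun M : 'M[F]_(bsz n i, bsz n j) => M (@Rank i.+1 (fun _ => n i) l r) (@Rank j.+1 (fun _ => n j) l' r')) (hC i j).
rewrite /= !mxE /=.
move=> ->.
rewrite !sig1_const !sig2_const.
done.
Qed.
Definition mm (k : 'I_KK) := n (tag (ee k)).
Local Notation N' := (\sum_(k < KK) mm k)%N.

Definition sigma (x : 'I_N') : 'I_N :=
  idxB (tag (ee (sig1 x))) (tagged (ee (sig1 x))) (sig2 x).

Lemma sigma_Rank k (a : 'I_(mm k)) : sigma (Rank k a) = idxB (tag (ee k)) (tagged (ee k)) a.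
Proof.
have H : forall k0 (a0 : 'I_(mm k0)), k0 = k -> val a0 = val a ->
    idxB (tag (ee k0)) (tagged (ee k0)) a0 = idxB (tag (ee k)) (tagged (ee k)) a.
  by move=> k0 a0 ek; subst k0 => /val_inj ->.
by apply: H; [exact: Rank1K | rewrite Rank2K].
Qed.

Lemma idxB_inj (i1 i2 : 'I_s) (l1 : 'I_i1.+1) (l2 : 'I_i2.+1) (a1 : 'I_(n i1)) (a2 : 'I_(n i2)) :
  idxB i1 l1 a1 = idxB i2 l2 a2 -> i1 = i2 /\ val l1 = val l2 /\ val a1 = val a2.
Proof.
move=> /(congr1 val)/eqP; rewrite eq_Rank => /andP[/eqP ei]; subst i2.
by move=> /eqP/val_inj/(congr1 val)/eqP; rewrite eq_Rank => /andP[/eqP el /eqP ea]; split=> //; split; [by rewrite el | exact: ea].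
Qed.

Lemma sigma_inj : injective sigma.
Proof.
move=> x y; rewrite -[x]sig2K -[y]sig2K; move: (sig2 x) (sig2 y).
move: (sig1 x) (sig1 y) => k1 k2 a1 a2.
rewrite !sigma_Rank => /idxB_inj [ei [el ea]].
have ek : ee k1 = ee k2 by apply: key_inj; rewrite /key /hgt el ei.
have ek2 : k1 = k2 by apply: ee_inj. subst k2.
by congr Rank; apply: val_inj.
Qed.

Lemma sumN : N' = N.
Proof.
rewrite /mm /ee -(big_tnth _ _ sl xpredT (fun p => n (tag p))).
rewrite (perm_big _ sl_perm) big_enum /=.
have := @sig_big_dep nat 0%N addn 'I_s (fun i => 'I_i.+1) xpredT (fun _ _ => true) (fun i _ => n i).
rewrite /= => <-.
by apply: eq_bigr => i _.
Qed.
Lemma sigma_bij : bijective sigma.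
Proof. apply: inj_card_bij; [exact: sigma_inj | by rewrite !card_ord sumN]. Qed.

Lemma key_order' (p q : PT) : (key q < key p)%N ->
  ~~ (tagged p + ((tag q).+1 - (tag p).+1) <= tagged q)%N.
Proof. by case: p q => [i l] [j l']; apply: key_order. Qed.

Variables (B : 'M[F]_N) (C : forall i j : 'I_s, nat -> 'M[F]_(n i, n j)).
Hypothesis hC : forall i j : 'I_s, submxblock B i j = LBm i.+1 j.+1 (C i j).

Definition Tm : 'M[F]_N' := \matrix_(x, y) B (sigma x) (sigma y).
Definition Pm : 'M[F]_(N, N') := \matrix_(x, y) (x == sigma y)%:R.
Definition Qm : 'M[F]_(N', N) := \matrix_(y, x) (x == sigma y)%:R.

Lemma Tblock k l a b : submxblock Tm k l a b =
  (if (tagged (ee k) + ((tag (ee l)).+1 - (tag (ee k)).+1) <= tagged (ee l))%N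
   then (-1) ^+ tagged (ee k) *: C (tag (ee k)) (tag (ee l))
          (tagged (ee l) - ((tag (ee l)).+1 - (tag (ee k)).+1) - tagged (ee k))%N.+1
   else 0) a b.
Proof. by rewrite !mxE !sigma_Rank (Bentry B C hC). Qed.

Lemma Tlow (k l : 'I_KK) : (l < k)%N -> submxblock Tm k l = 0.
Proof.
move=> lt; apply/matrixP => a b; rewrite Tblock.
by rewrite (negbTE (key_order' _ _ (ee_lt _ _ lt))) !mxE.
Qed.

Lemma Tdiag (k : 'I_KK) : submxblock Tm k k = (-1) ^+ tagged (ee k) *: C (tag (ee k)) (tag (ee k)) 1%N.
Proof.
apply/matrixP => a b; rewrite Tblock subnn addn0 leqnn.
by rewrite subn0 subnn.
Qed.

Lemma PQ : Pm *m Qm = 1%:M.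
Proof.
have [si sK sK'] := sigma_bij.
apply/matrixP => x z; rewrite !mxE.
rewrite (bigD1 (si x)) //= !mxE sK' eqxx mul1r [X in _ + X]big1 ?addr0; first by rewrite eq_sym.
move=> y ne; rewrite !mxE; case: eqP => [E|]; last by rewrite mul0r.
by rewrite E sK eqxx in ne.
Qed.

Lemma QP : Qm *m Pm = 1%:M.
Proof.
apply/matrixP => y w; rewrite !mxE.
rewrite (bigD1 (sigma y)) //= !mxE eqxx mul1r [X in _ + X]big1 ?addr0.
  by rewrite (inj_eq sigma_inj) eq_sym.
move=> x ne; rewrite !mxE (negbTE ne) mul0r //.
Qed.

Lemma Teq : Tm = Qm *m B *m Pm.
Proof.
apply/matrixP => y w; rewrite !mxE.
rewrite (bigD1 (sigma w)) //= [X in _ + X]big1 ?addr0; last first.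
  by move=> z ne; rewrite [Pm _ _]mxE (negbTE ne) mulr0.
rewrite [Pm _ _]mxE eqxx mulr1 !mxE.
rewrite (bigD1 (sigma y)) //= [X in _ + X]big1 ?addr0; last first.
  by move=> x ne; rewrite !mxE (negbTE ne) mul0r.
by rewrite !mxE eqxx mul1r.
Qed.

Lemma BPTQ : B = Pm *m Tm *m Qm.
Proof. by rewrite Teq !mulmxA PQ mul1mx -mulmxA PQ mulmx1. Qed.


Lemma charB : char_poly B =
  \prod_(i < s) \prod_(l < i.+1) char_poly ((-1) ^+ l *: C i i 1%N).
Proof.
have [si sK sK'] := sigma_bij.
have -> : char_poly B = char_poly Tm.
  rewrite /char_poly -(@det_reindex _ _ _ si); last by exists sigma.
  congr (\det _); apply/matrixP => x y; rewrite !mxE sK' sK'.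
  by rewrite (inj_eq (can_inj sK')).
rewrite (char_poly_mxblock_ut _ _ _ _ Tlow).
pose g (p : PT) := char_poly ((-1) ^+ tagged p *: C (tag p) (tag p) 1%N).
transitivity (\prod_(k < KK) g (ee k)).
  by apply: eq_bigr => k _; rewrite Tdiag.
rewrite /ee /KK -(big_tnth _ _ sl xpredT g) (perm_big _ sl_perm) big_enum /=.
have := @sig_big_dep _ 1 *%R 'I_s (fun i => 'I_i.+1) xpredT (fun _ _ => true)
  (fun i l => char_poly ((-1) ^+ l *: C i i 1%N)).
by rewrite /= => ->.
Qed.

Lemma part2 (i : 'I_s) : char_poly (submxblock B i i) =
  \prod_(l < i.+1) char_poly ((-1) ^+ l *: C i i 1%N).
Proof.
rewrite hC /LBm (@char_poly_mxblock_ut _ i.+1 (fun _ => n i)).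
  apply: eq_bigr => l _; rewrite mxblockK subnn addn0 leqnn.
  by rewrite subn0 subnn.
move=> k l lt; rewrite mxblockK subnn addn0 leqNgt lt; done.
Qed.

Lemma part3 (i : 'I_s) : \prod_(l < i.+1) char_poly ((-1) ^+ l *: C i i 1%N) =
  char_poly (C i i 1%N) ^+ uphalf i.+1 * char_poly (- C i i 1%N) ^+ (i.+1)./2.
Proof.
under eq_bigr do rewrite -signr_odd.
rewrite (parity_prod _ (fun b => char_poly ((-1) ^+ b *: C i i 1%N))).
by rewrite /= expr0 expr1 scale1r scaleN1r.
Qed.

Lemma part1 : perm_eq [seq sqm (submxblock Tm k k) | k <- enum 'I_KK]
                  (expected_diag (fun i => C i i 1%N)).
Proof.
pose g (p : PT) := sqm ((-1) ^+ tagged p *: C (tag p) (tag p) 1%N).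
have -> : [seq sqm (submxblock Tm k k) | k <- enum 'I_KK] = map g sl.
  have E := map_tnth_enum (in_tuple sl); rewrite /= in E.
  rewrite -[in RHS]E -map_comp.
  by apply: eq_map => k /=; rewrite Tdiag.
apply: perm_trans (perm_map g sl_perm) _.
rewrite enumPT map_flatten -map_comp /expected_diag.
apply: perm_flatten_map => i /=.
rewrite -map_comp.
have -> : [seq (g \o Tagged (fun i0 : 'I_s => 'I_i0.+1)) l | l <- enum 'I_i.+1] =
   [seq (fun b => sqm ((-1) ^+ b *: C i i 1%N)) (odd l) | l <- map val (enum 'I_i.+1)].
  by rewrite -map_comp; apply: eq_map => l /=; rewrite /g /= signr_odd.
rewrite val_enum_ord.
have := parity_perm _ (fun b => sqm ((-1) ^+ b *: C i i 1%N)) i.+1.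
by rewrite /= expr0 expr1 scale1r scaleN1r.
Qed.

Lemma main_aux :
  (exists (K : nat) (m : 'I_K -> nat) (T : 'M[F]_(\sum_(k < K) m k))
          (P : 'M[F]_(\sum_(i < s) bsz n i, \sum_(k < K) m k))
          (Q : 'M[F]_(\sum_(k < K) m k, \sum_(i < s) bsz n i)),
      [/\ P *m Q = 1%:M, Q *m P = 1%:M, B = P *m T *m Q,
          (forall k l : 'I_K, (l < k)%N -> submxblock T k l = 0)
        & perm_eq [seq sqm (submxblock T k k) | k <- enum 'I_K]
                  (expected_diag (fun i => C i i 1%N))])
  /\
  char_poly B = \prod_(i < s) char_poly (submxblock B i i)
  /\
  char_poly B = \prod_(i < s) (char_poly (C i i 1%N) ^+ uphalf i.+1
                              * char_poly (- C i i 1%N) ^+ (i.+1)./2).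
Proof.
split.
  exists KK, mm, Tm, Pm, Qm; split.
  - exact: PQ.
  - exact: QP.
  - exact: BPTQ.
  - exact: Tlow.
  - exact: part1.
split; rewrite charB; apply: eq_bigr => i _; first by rewrite part2.
exact: part3.
Qed.

End M.
End S.

Theorem lemma4p8 (F : fieldType) (s : nat) (n : 'I_s -> nat)
  (B : 'M[F]_(\sum_(i < s) bsz n i))
  (hAB : Amx F n *m B + B *m Amx F n = 0)
  (C : forall i j : 'I_s, nat -> 'M[F]_(n i, n j))
  (hC : forall i j : 'I_s,
      submxblock B i j = LBm i.+1 j.+1 (C i j)) :
  (exists (K : nat) (m : 'I_K -> nat) (T : 'M[F]_(\sum_(k < K) m k))
          (P : 'M[F]_(\sum_(i < s) bsz n i, \sum_(k < K) m k))
          (Q : 'M[F]_(\sum_(k < K) m k, \sum_(i < s) bsz n i)),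
      [/\ P *m Q = 1%:M, Q *m P = 1%:M, B = P *m T *m Q,
          (forall k l : 'I_K, (l < k)%N -> submxblock T k l = 0)
        & perm_eq [seq sqm (submxblock T k k) | k <- enum 'I_K]
                  (expected_diag (fun i => C i i 1%N))])
  /\
  char_poly B = \prod_(i < s) char_poly (submxblock B i i)
  /\
  char_poly B = \prod_(i < s) (char_poly (C i i 1%N) ^+ uphalf i.+1
                              * char_poly (- C i i 1%N) ^+ (i.+1)./2).
Proof. exact: (@main_aux s F n B C hC). Qed.
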